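(* Let $N\ge2$, $\mathcal N=\{1,\dots,N\}$, $\mathcal F=\{(i,j):i<j\}$, $B,M_1,\dots,M_N\in\mathbb Z_{\ge0}$, $p_1,\dots,p_N\in[0,1]$, $p_{\mathrm{swap}}\in[0,1]$, $\Delta t_{\mathrm{mem}}>0$. Let $\mathcal C=\prod_{i}\{0,1,\dots,M_i\}$ with probability mass function $\pi(c)=\prod_i\binom{M_i}{c_i}p_i^{c_i}(1-p_i)^{M_i-c_i}$. For $c\in\mathcal C$ let $\mathcal Y(c)=\{y\in\mathbb Z_{\ge0}^{\mathcal F}: \sum_{j<i}y_{ji}+\sum_{j>i}y_{ij}\le c_i\ \forall i,\ \sum_{(i,j)\in\mathcal F}y_{ij}\le B\}$. Define $$\Lambda_{\mathrm{mem}}=\Big\{\lambda\in\mathbb R_{\ge0}^{\mathcal F}:\ \exists\, v \text{ with } v(c)\in\mathrm{co}\,\mathcal Y(c)\ \forall c\in\mathcal C,\ \lambda=\frac{p_{\mathrm{swap}}}{\Delta t_{\mathrm{mem}}}\sum_{c\in\mathcal C}\pi(c)v(c)\Big\}.$$ Then $$\max_{\lambda\in\Lambda_{\mathrm{mem}}}\sum_{(i,j)\in\mathcal F}\lambda_{ij}=\frac{p_{\mathrm{swap}}}{\Delta t_{\mathrm{mem}}}\sum_{c\in\mathcal C}\pi(c)\,\min\Big\{B,\ \Big\lfloor\tfrac12\sum_i c_i\Big\rfloor,\ \sum_i c_i-\max_i c_i\Big\}.$$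
   Context: This models a memory-equipped (herald-then-swap) quantum switch: $c_i$ is the number of the $M_i$ switch memories dedicated to client $i$ that hold a successful link-level entangled pair in a slot (each independently with probability $p_i$), $v(c)$ is the expected BSM-pairing vector chosen by a stationary randomized scheduling rule upon observing $c$, $p_{\mathrm{swap}}$ the success probability of each swap, and $\Delta t_{\mathrm{mem}}$ the slot duration; $\mathrm{co}$ denotes convex hull. *)

(* Defs.v *)
From HB Require Import structures.
From mathcomp Require Import all_boot all_order all_algebra.
From mathcomp Require Import reals.
Set Implicit Arguments. Unset Strict Implicit. Unset Printing Implicit Defensive.
Import Order.TTheory GRing.Theory Num.Theory.
Local Open Scope ring_scope.

Definition fpair (N : nat) := {ij : 'I_N * 'I_N | (ij.1 < ij.2)%N}.

Definition config (N : nat) (M : 'I_N -> nat) :=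
  {dffun forall i : 'I_N, 'I_(M i).+1}.

Definition pmf_pi (R : realType) (N : nat) (M : 'I_N -> nat) (p : 'I_N -> R)
    (c : config M) : R :=
  \prod_(i < N) (('C(M i, c i))%:R * p i ^+ c i * (1 - p i) ^+ (M i - c i)).

Definition load (N : nat) (y : fpair N -> nat) (i : 'I_N) : nat :=
  (\sum_(f : fpair N | (val f).2 == i) y f + \sum_(f : fpair N | (val f).1 == i) y f)%N.

Definition Yset (N : nat) (M : 'I_N -> nat) (B : nat) (c : config M)
    (y : fpair N -> nat) : Prop :=
  (forall i : 'I_N, (load y i <= c i)%N) /\ (\sum_(f : fpair N) y f <= B)%N.

Definition convY (R : realType) (N : nat) (M : 'I_N -> nat) (B : nat)
    (c : config M) (x : fpair N -> R) : Prop :=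
  exists (n : nat) (w : 'I_n -> R) (ys : 'I_n -> fpair N -> nat),
    (forall k, Yset B c (ys k)) /\ (forall k, 0 <= w k) /\
    \sum_(k < n) w k = 1 /\
    (forall f, x f = \sum_(k < n) w k * (ys k f)%:R).

Definition Lambda_mem (R : realType) (N : nat) (M : 'I_N -> nat) (B : nat)
    (p : 'I_N -> R) (pswap dt : R) (lam : fpair N -> R) : Prop :=
  (forall f, 0 <= lam f) /\
  exists v : config M -> fpair N -> R,
    (forall c, convY B c (v c)) /\
    (forall f, lam f = pswap / dt * \sum_(c : config M) pmf_pi p c * v c f).

Definition opt_value (R : realType) (N : nat) (M : 'I_N -> nat) (B : nat)
    (p : 'I_N -> R) (pswap dt : R) : R :=
  pswap / dt * \sum_(c : config M)
    pmf_pi p c * (minn B (minn (\sum_(i < N) (c i : nat))%N./2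
                     ((\sum_(i < N) (c i : nat)) - \max_(i < N) (c i : nat))%N))%:R.

Arguments Lambda_mem {R N} M B p pswap dt lam.
Arguments opt_value {R N} M B p pswap dt.

(* Main.v *)
Require Import Defs.
From HB Require Import structures.
From mathcomp Require Import all_boot all_order all_algebra.
From mathcomp Require Import reals zify.
From Stdlib Require Import ClassicalEpsilon.
Import Order.TTheory GRing.Theory Num.Theory.

Lemma sum_load {N : nat} (y : fpair N -> nat) :
  (\sum_(i < N) load y i = 2 * \sum_(f : fpair N) y f)%N.
Proof.
rewrite /load big_split /=.
rewrite [RHS](_ : _ = \sum_f y f + \sum_f y f)%N; last by rewrite mul2n -addnn.
congr (_ + _)%N.
- rewrite (partition_big (fun f : fpair N => (val f).2) xpredT) //.
- rewrite (partition_big (fun f : fpair N => (val f).1) xpredT) //.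
Qed.

Lemma load_le_sum {N : nat} (y : fpair N -> nat) i : (load y i <= \sum_f y f)%N.
Proof.
rewrite /load (big_mkcond (fun f : fpair N => (sval f).2 == i)).
rewrite (big_mkcond (fun f : fpair N => (sval f).1 == i)) -big_split /=.
apply: leq_sum => f _.
case: f => [[a b] /= hab].
have hne : (b == i) && (a == i) = false.
  apply/negbTE/negP => /andP[/eqP e1 /eqP e2]. by move: hab; rewrite e1 e2 ltnn.
move: hne; case: (b == i); case: (a == i) => //= _; lia.
Qed.

Lemma upper {N : nat} (d : 'I_N -> nat) (y : fpair N -> nat) :
  (forall i, load y i <= d i)%N ->
  (\sum_f y f <= minn (\sum_i d i)./2 (\sum_i d i - \max_i d i))%N.
Proof.
move=> hl.
have hS : (\sum_i load y i <= \sum_i d i)%N by apply: leq_sum.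
rewrite sum_load in hS.
have hi : forall i, (d i + \sum_f y f <= \sum_i d i)%N.
  move=> i; have hL := load_le_sum y i.
  have e1 := sum_load y.
  rewrite (bigD1 i) //= in e1.
  rewrite (bigD1 i) //= leq_add2l.
  have h2 : (\sum_(j < N | j != i) load y j <= \sum_(j < N | j != i) d j)%N by apply: leq_sum.
  apply: leq_trans h2.
  rewrite -(leq_add2l (load y i)) e1 mul2n -addnn leq_add2r //.
have hm : (\max_i d i <= \sum_i d i - \sum_f y f)%N.
  apply/bigmax_leqP => i _; have := hi i; lia.
rewrite leq_min; apply/andP; split.
- by rewrite -divn2 leq_divRL // mulnC.
- have hT : (\sum_f y f <= \sum_i d i)%N by apply: leq_trans hS; rewrite leq_pmull.
  by rewrite -(leq_add2r (\max_i d i)) subnK ?(leq_trans hm) ?leq_subr // -leq_subRL // addnC.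

Qed.

Lemma sum_ind {N : nat} (P : pred (fpair N)) (e : fpair N) :
  (\sum_(f | P f) ((f == e) : nat) = P e)%N.
Proof.
rewrite big_mkcond (bigD1 e) //= eqxx big1 ?addn0; first by case: (P e).
by move=> f /negbTE ->; case: (P f).
Qed.

Lemma sum_indN {N : nat} (a : 'I_N) : (\sum_(j < N) ((j == a) : nat) = 1)%N.
Proof.
by rewrite (bigD1 a) //= eqxx big1 ?addn0 // => j /negbTE ->.
Qed.

Lemma load_add {N : nat} (y : fpair N -> nat) e i :
  load (fun f => y f + (f == e))%N i = (load y i + (((sval e).2 == i) + ((sval e).1 == i)))%N.
Proof. by rewrite /load !big_split /= !sum_ind addnACA. Qed.

Lemma lower (N : nat) k : forall d : 'I_N -> nat,
  (2 * k <= \sum_(i < N) d i)%N -> (forall j, d j + k <= \sum_(i < N) d i)%N ->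
  exists y : fpair N -> nat, (forall i, load y i <= d i)%N /\ \sum_f y f = k.
Proof.
elim: k => [|k IH] d h2 hj.
  exists (fun _ => 0%N); split; last by rewrite big1.
  by move=> i; rewrite /load !big1.
have [i0 hi0|hnone] := pickP (fun i => 0 < d i)%N; last first.
  by move: h2; rewrite big1 // => i _; move: (hnone i) => /= /negbT; rewrite lt0n negbK => /eqP.
case: (arg_maxnP d (erefl true : xpredT i0)) => a _ ha.
have [i1 hi1|hnone] := pickP (fun i => (i != a) && (0 < d i))%N; last first.
  move: (hj a); rewrite (bigD1 a) //= big1 ?addn0; first lia.
  move=> i hia; move: (hnone i) => /=; rewrite hia /= => /negbT; rewrite lt0n negbK => /eqP //.
move: hi1 => /andP[i1a i1pos].
case: (@arg_maxnP _ i1 (fun j => j != a) d i1a) => b bna hb.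
have da : (0 < d a)%N by apply: leq_trans hi0 (ha _ isT).
have db : (0 < d b)%N by apply: leq_trans i1pos (hb _ i1a).
pose d' j := (d j - (j == a) - (j == b))%N.
have hd : forall j, d j = (d' j + (j == a) + (j == b))%N.
  move=> j; rewrite /d'; case: (eqVneq j a) => [hja|hja]; case: (eqVneq j b) => [hjb|hjb] //=.
  - by move: bna; rewrite -hjb hja eqxx.
  - subst; rewrite ?(negbTE hjb) ?eqxx; lia.
  - subst; rewrite ?eqxx ?(negbTE hja); lia.
  - lia.
have hS : (\sum_(i < N) d i = \sum_(i < N) d' i + 2)%N.
  by rewrite (eq_bigr _ (fun j _ => hd j)) !big_split /= !sum_indN -addnA.
have hdb : (d b <= d a)%N by apply: ha.
have [y' [hy'1 hy'2]] : exists y : fpair N -> nat, (forall i, load y i <= d' i)%N /\ \sum_f y f = k.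
  apply: IH; first by move: h2; rewrite hS; lia.
  set S' := \sum_(i < N) d' i in hS *.
  move=> j; rewrite -/S'; have := hd j; case: (eqVneq j a) => [hja|hja]; case: (eqVneq j b) => [hjb|hjb] //=.
  - by move: bna; rewrite -hjb hja eqxx.
  - subst; rewrite ?(negbTE hjb) ?eqxx; move: (hj a); rewrite hS. lia.
  - subst j; move: (hj b); rewrite hS; lia.
  - have hjb' : (d j <= d b)%N by apply: hb.
    have [lt|eq] := ltnP (d j) (d a).
      move: (hj a); rewrite hS; lia.
    have e3 : (d a + d b + d j <= \sum_(i < N) d i)%N.
      rewrite (bigD1 a) //= (bigD1 b) /=; last by rewrite bna.
      rewrite (bigD1 j) /=; last by rewrite hja hjb.
      lia.
    move: e3 h2; rewrite hS; lia.
have [e he] : exists e : fpair N,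
    forall i, (((sval e).2 == i) + ((sval e).1 == i) = (i == a) + (i == b))%N.
  case: (ltngtP a b) => h.
  - exists (exist _ (a, b) h) => i /=. by rewrite !(eq_sym _ i) addnC.
  - exists (exist _ (b, a) h) => i /=. by rewrite !(eq_sym _ i).
  - by move: bna; rewrite (val_inj h) eqxx.
exists (fun f => y' f + (f == e))%N; split.
  move=> i; rewrite load_add (hd i) -addnA he leq_add2r; exact: hy'1.
by rewrite big_split /= hy'2 sum_ind addn1.
Qed.



Local Open Scope ring_scope.

Theorem mainTheorem3 (R : realType) (N : nat) (hN : (2 <= N)%N)
  (B : nat) (M : 'I_N -> nat) (p : 'I_N -> R)
  (hp : forall i, 0 <= p i <= 1)
  (pswap dt : R) (hps : 0 <= pswap <= 1) (hdt : 0 < dt) :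
  (exists lam : fpair N -> R, Lambda_mem M B p pswap dt lam /\
      \sum_(f : fpair N) lam f = opt_value M B p pswap dt) /\
  (forall lam : fpair N -> R, Lambda_mem M B p pswap dt lam ->
      \sum_(f : fpair N) lam f <= opt_value M B p pswap dt).
Proof.
have hpi : forall c : config M, 0 <= pmf_pi p c.
  move=> c; rewrite /pmf_pi; apply: prodr_ge0 => i _.
  have /andP[h0 h1] := hp i.
  by rewrite !mulr_ge0 // ?exprn_ge0 // subr_ge0.
have hk : 0 <= pswap / dt.
  by case/andP: hps => h0 _; rewrite divr_ge0 // ltW.
pose opt (c : config M) : nat := minn B (minn (\sum_(i < N) (c i : nat))%N./2
                     ((\sum_(i < N) (c i : nat)) - \max_(i < N) (c i : nat))%N).
have hub : forall (c : config M) y, Yset B c y -> (\sum_f y f <= opt c)%N.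
  move=> c y [h1 h2]; rewrite /opt leq_min h2 /=.
  exact: (@upper N (fun i => (c i : nat)) y h1).
have hex : forall c : config M, exists y, Yset B c y /\ \sum_f y f = opt c.
  move=> c.
  have hmax : (\max_(i < N) (c i : nat) <= \sum_(i < N) (c i : nat))%N.
    apply/bigmax_leqP => i _; by rewrite (bigD1 i) //= leq_addr.
  have h2k : (2 * opt c <= \sum_(i < N) (c i : nat))%N.
    rewrite /opt; set S := (\sum_(i < N) _)%N; lia.
  have hjk : forall j, ((c j : nat) + opt c <= \sum_(i < N) (c i : nat))%N.
    move=> j; have := leq_bigmax (F := fun i => (c i : nat)) j.
    move: hmax; rewrite /opt; set S := (\sum_(i < N) _)%N; set m := (\max_(i < N) _)%N. lia.
  have [y [h1 h2]] := lower N (opt c) (fun i => (c i : nat)) h2k hjk.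
  exists y; split => //; split => //; rewrite h2 /opt geq_minl //.
pose ystar (c : config M) := proj1_sig (constructive_indefinite_description _ (hex c)).
have hys : forall c, Yset B c (ystar c) /\ \sum_f ystar c f = opt c.
  move=> c; exact: (proj2_sig (constructive_indefinite_description _ (hex c))).
split.
  exists (fun f => pswap / dt * \sum_(c : config M) pmf_pi p c * (ystar c f)%:R).
  split; first split.
  - move=> f; apply: mulr_ge0 hk _; apply: sumr_ge0 => c _; exact: mulr_ge0.
  - exists (fun c f => (ystar c f)%:R); split => // c.
    exists 1%N, (fun _ => 1), (fun _ => ystar c); split; first by move=> _; case: (hys c).
    split; first by move=> _; exact: ler01.
    split; first by rewrite big_ord1.
    by move=> f; rewrite big_ord1 mul1r.
  rewrite /opt_value -mulr_sumr; congr (_ * _).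
  rewrite exchange_big /=; apply: eq_bigr => c _.
  by rewrite -mulr_sumr -natr_sum (proj2 (hys c)).
move=> lam [hpos [v [hv hl]]].
rewrite (eq_bigr _ (fun f _ => hl f)) -mulr_sumr /opt_value.
apply: ler_wpM2l; first exact: hk.
rewrite exchange_big /=; apply: ler_sum => c _.
rewrite -mulr_sumr; apply: ler_wpM2l; first exact: hpi.
have [n [w [ys [hY [hw [hw1 hx]]]]]] := hv c.
rewrite (eq_bigr _ (fun f _ => hx f)) exchange_big /=.
apply: le_trans (_ : \sum_(k < n) w k * (opt c)%:R <= _).
  apply: ler_sum => k _; rewrite -mulr_sumr -natr_sum.
  apply: ler_wpM2l; first exact: hw. rewrite ler_nat; apply: hub.
  exact: hY.
by rewrite -mulr_suml hw1 mul1r.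
Qed.
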